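(* Let $K\ge 2$, $0<q<p$ with $p+(K-1)q=1$, and $\phi\in\Delta$. Suppose the smallest entry of $\phi$, say $\phi_m$, satisfies $\phi_m<q$, and the second smallest entry of $\phi$ is at least $\frac{Kq-\phi_m}{K-1}$. Then the three points $\mathrm{InvP}(\phi)$, $\mathrm{MLE}^*(\phi)$, $\mathrm{InvN}(\phi)$ of $\mathbb{R}^K$ are collinear, and $\mathrm{MLE}^*(\phi)$ lies between $\mathrm{InvP}(\phi)$ and $\mathrm{InvN}(\phi)$ (on the segment joining them).
   Context: $\Delta=\{\theta\in\mathbb{R}^K:\theta_i\ge 0,\ \sum_i\theta_i=1\}$. $p,q$ are the parameters of the randomized response mechanism ($p$ = probability of reporting the true value, $q$ = probability of reporting each other value). Estimators: $\mathrm{Inv}(\phi)_i=\frac{\phi_i-q}{p-q}$; $\mathrm{InvN}(\phi)_i=\frac{\max(0,\mathrm{Inv}(\phi)_i)}{\sum_j\max(0,\mathrm{Inv}(\phi)_j)}$; $\mathrm{InvP}(\phi)=\arg\min_{\theta\in\Delta}\|\theta-\mathrm{Inv}(\phi)\|_2$ (Euclidean projection onto $\Delta$). $\mathrm{MLE}^*(\phi)$: for real $\tau$ let $m(\tau)=|\{i:\phi_i<\tau\}|$ and $c_\tau=\frac{1-m(\tau)q}{\sum_{i:\phi_i\ge\tau}\phi_i}$; let $\tau^*$ be the smallest $\tau\in\{\phi_1,\dots,\phi_K\}$ such that $c_\tau\phi_i\ge q$ for all $i$ with $\phi_i\ge\tau$; then $\mathrm{MLE}^*(\phi)_i=0$ if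 $\phi_i<\tau^*$ and $\frac{c_{\tau^*}\phi_i-q}{p-q}$ otherwise. *)

(* Defs.v *)
From HB Require Import structures.
From mathcomp Require Import all_boot all_order all_algebra.
Set Implicit Arguments. Unset Strict Implicit. Unset Printing Implicit Defensive.
Import Order.TTheory GRing.Theory Num.Theory.
Local Open Scope ring_scope.

Section RR.
Variable R : realFieldType.
Variable K : nat.

Definition in_simplex (th : 'I_K -> R) : Prop :=
  (forall i, 0 <= th i) /\ \sum_(i < K) th i = 1.

Definition Inv (p q : R) (phi : 'I_K -> R) : 'I_K -> R :=
  fun i => (phi i - q) / (p - q).

Definition InvN (p q : R) (phi : 'I_K -> R) : 'I_K -> R :=
  fun i => Num.max 0 (Inv p q phi i) / \sum_(j < K) Num.max 0 (Inv p q phi j).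

Definition sqdist (x y : 'I_K -> R) : R := \sum_(i < K) (x i - y i) ^+ 2.

Definition is_proj_simplex (x th : 'I_K -> R) : Prop :=
  in_simplex th /\ forall th', in_simplex th' -> sqdist th x <= sqdist th' x.

Definition mcount (phi : 'I_K -> R) (tau : R) : nat := #|[pred i | phi i < tau]|.

Definition ctau (q : R) (phi : 'I_K -> R) (tau : R) : R :=
  (1 - (mcount phi tau)%:R * q) / \sum_(i < K | tau <= phi i) phi i.

Definition admissible (q : R) (phi : 'I_K -> R) (tau : R) : bool :=
  [forall i : 'I_K, (tau <= phi i) ==> (q <= ctau q phi tau * phi i)].

(* tau^* = smallest admissible tau among phi_1..phi_K
   (defaults to 0 if there is none; irrelevant where it is used) *)
Definition tau_star (q : R) (phi : 'I_K -> R) : R :=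
  let s := [seq phi i | i <- enum 'I_K & admissible q phi (phi i)] in
  \big[Num.min/head 0 s]_(x <- s) x.

Definition MLEstar (p q : R) (phi : 'I_K -> R) : 'I_K -> R :=
  fun i => let t := tau_star q phi in
    if phi i < t then 0 else (ctau q phi t * phi i - q) / (p - q).

End RR.

(* Main.v *)
Require Import Defs.
From HB Require Import structures.
From mathcomp Require Import all_boot all_order all_algebra.
From mathcomp Require Import ring lra.
Import Order.TTheory GRing.Theory Num.Theory.
Local Open Scope ring_scope.

Lemma sum_neq (R : realFieldType) (K : nat) (m : 'I_K) (F : 'I_K -> R) :
  \sum_(i | i != m) F i = \sum_i F i - F m.
Proof. by rewrite [in RHS](bigD1 m) //= addrAC subrr add0r. Qed.

Lemma bigmin_le (R : realFieldType) (h : R) (s : seq R) y :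
  y \in s -> \big[Num.min/h]_(x <- s) x <= y.
Proof.
elim: s => // x s IH; rewrite in_cons big_cons => /orP [/eqP -> | ys].
  by rewrite ge_min lexx.
by rewrite ge_min IH ?orbT.
Qed.

Theorem theorem2 (R : realFieldType) (K : nat) (p q : R) (phi : 'I_K -> R)
  (m : 'I_K) (thP : 'I_K -> R) :
  (2 <= K)%N ->
  0 < q -> q < p -> p + (K - 1)%:R * q = 1 ->
  in_simplex phi ->
  (forall i, phi m <= phi i) ->
  phi m < q ->
  (forall i, i != m -> (K%:R * q - phi m) / (K - 1)%:R <= phi i) ->
  is_proj_simplex (Inv p q phi) thP ->
  exists2 t : R, 0 <= t <= 1 &
    forall i, MLEstar p q phi i = (1 - t) * thP i + t * InvN p q phi i.
Proof.
move=> K2 q0 qp hpq [phi0 phi1] phimin phimq hL [thPs thPmin].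
set r := (K - 1)%:R in hpq hL.
have Kr : K%:R = r + 1 :> R by rewrite /r natr1 subn1 prednK // ltnW.
have r1 : 1 <= r by rewrite /r ler1n subn_gt0.
set a := phi m in phimin phimq hL.
have hb : forall i, i != m -> K%:R * q - a <= phi i * r.
  by move=> i /hL; rewrite ler_pdivrMr //; lra.
have hbq : forall i, i != m -> q < phi i.
  move=> i /hb; rewrite Kr => h.
  have : q * r < phi i * r by nra.
  by rewrite ltr_pM2r //; lra.
set d := p - q.
have d0 : 0 < d by rewrite /d subr_gt0.
have hp : p = 1 - r * q by lra.
have p1 : p <= 1 by nra.
set x := Inv p q phi.
have xE : forall i, x i = (phi i - q) / d by [].
have xm0 : x m < 0 by rewrite xE pmulr_llt0 ?invr_gt0 // subr_lt0.
have xsum : \sum_i x i = 1.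
  rewrite /x /Inv -mulr_suml sumrB phi1 sumr_const card_ord -/d.
  rewrite -[q *+ K]mulr_natr mulrC Kr.
  have -> : 1 - q * (r + 1) = d by rewrite /d hp; ring.
  by rewrite mulVf // gt_eqF.
pose P i := if i == m then 0 else x i + x m / r.
have Pm : P m = 0 by rewrite /P eqxx.
have Pi : forall i, i != m -> P i = x i + x m / r by move=> i /negbTE; rewrite /P => ->.
have Pge0 : forall i, 0 <= P i.
  move=> i; case: (eqVneq i m) => [->|im]; first by rewrite Pm.
  rewrite Pi // !xE.
  have -> : (phi i - q) / d + (a - q) / d / r = ((phi i * r) - (r + 1) * q + a) / (d * r).
    by field; apply/andP; split; apply/eqP; lra.
  apply: divr_ge0; last by nra.
  by move: (hb i im); rewrite Kr; lra.
have sumneqP : \sum_(i | i != m) P i = 1.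
  rewrite (eq_bigr (fun i => x i + x m / r)); last by move=> i /Pi.
  rewrite big_split /= !sum_neq xsum sumr_const card_ord -mulr_natr Kr.
  by field; apply/eqP; lra.
have Psimp : in_simplex P.
  by split=> //; rewrite (bigD1 m) //= Pm add0r.
have expand : forall th, sqdist th x = sqdist th P + sqdist P x +
    2 * \sum_i (th i - P i) * (P i - x i).
  move=> th; rewrite /sqdist mulr_sumr -!big_split; apply: eq_bigr => i _ /=; ring.
have inner : forall th, in_simplex th -> 0 <= \sum_i (th i - P i) * (P i - x i).
  move=> th [th0 th1].
  rewrite (bigD1 m) //= (eq_bigr (fun i => (th i - P i) * (x m / r))); last first.
    by move=> i /Pi ->; congr (_ * _); ring.
  rewrite -mulr_suml sumrB sumneqP sum_neq th1 Pm.
  have -> : (th m - 0) * (0 - x m) + (1 - th m - 1) * (x m / r) =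
      th m * (- x m) * ((r + 1) / r).
    by field; apply/eqP; lra.
  apply: mulr_ge0; last by apply: divr_ge0; lra.
  by apply: mulr_ge0; [apply: th0 | lra].
have thPE : forall i, thP i = P i.
  have h1 := thPmin P Psimp.
  rewrite (expand thP) (expand P) in h1.
  have h2 := inner thP thPs.
  have h3 : \sum_i (P i - P i) * (P i - x i) = 0.
    by rewrite big1 // => i _; rewrite subrr mul0r.
  have h4 : sqdist P P = 0 by rewrite /sqdist big1 // => i _; rewrite subrr expr0n.
  rewrite h3 h4 in h1.
  have h5 : 0 <= sqdist thP P by apply: sumr_ge0 => i _; apply: sqr_ge0.
  have h6 : sqdist thP P = 0 by lra.
  move=> i; have := @psumr_eq0P _ _ _ (fun i => (thP i - P i) ^+ 2) (fun i _ => sqr_ge0 (thP i - P i)) h6 i isT.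
  by move/eqP; rewrite sqrf_eq0 subr_eq0 => /eqP.
have goodT : forall T, a < T -> (forall i, i != m -> T <= phi i) ->
   (forall i, (T <= phi i) = (i != m)) /\ ctau q phi T = (1 - q) / (1 - a).
  move=> T aT Ti.
  have Tle : forall i, (T <= phi i) = (i != m).
    move=> i; case: (eqVneq i m) => [->|im]; first by rewrite leNgt aT.
    by rewrite Ti.
  split=> //.
  rewrite /ctau (eq_bigl (fun i => i != m)); last by move=> i; exact: Tle.
  rewrite sum_neq phi1.
  have -> : mcount phi T = 1%N.
    rewrite /mcount -(card1 m); apply: eq_card => i; rewrite !inE.
    case: (eqVneq i m) => [->|im] /=; first by rewrite aT.
    by rewrite ltNge Ti.
  by rewrite mul1r.
have [j1 j1m] : exists j1 : 'I_K, j1 != m.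
  have K1 : (1 < K)%N by [].
  have K0 : (0 < K)%N by apply: ltnW.
  case: (eqVneq (nat_of_ord m) 0%N) => hm.
    by exists (Ordinal K1); apply/eqP => /(congr1 val); rewrite /= hm.
  by exists (Ordinal K0); apply/eqP => /(congr1 val) /= h; move: hm; rewrite -h.
case: (@arg_minP _ _ _ j1 (fun i => i != m) phi j1m) => j0 j0m j0min.
have aj0 : a < phi j0 by have := hbq j0 j0m; lra.
have [Tle0 c0] := goodT (phi j0) aj0 j0min.
have a1 : 0 < 1 - a by lra.
have adm : admissible q phi (phi j0).
  apply/forallP => i; apply/implyP; rewrite Tle0 => im; rewrite c0.
  rewrite mulrAC ler_pdivlMr //.
  have h := hb i im; rewrite Kr in h.
  have hq := hbq i im.
  have h' : 0 <= r * ((1 - q) * phi i - q * (1 - a)) by nra.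
  rewrite pmulr_rge0 in h'; [lra | lra].
set s := [seq phi i | i <- enum 'I_K & admissible q phi (phi i)].
have js : phi j0 \in s by rewrite map_f // mem_filter adm mem_enum.
have tle : tau_star q phi <= phi j0 by rewrite /tau_star; apply: bigmin_le.
have sgt : forall v, v \in s -> a < v.
  move=> v /mapP [i]; rewrite mem_filter => /andP [adi _] ->.
  case: (eqVneq i m) => [eim|im]; last by have := hbq i im; lra.
  rewrite eim in adi.
  have := forallP adi m; rewrite lexx /=.
  have -> : ctau q phi (phi m) = 1.
    rewrite /ctau (eq_bigl (fun _ => true)); last by move=> i'; rewrite phimin.
    rewrite phi1.
    have -> : mcount phi (phi m) = 0%N.
      apply: eq_card0 => i'; rewrite !inE ltNge phimin //.
    by rewrite mul0r subr0 divr1.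
  rewrite mul1r -/a => h; exfalso; lra.
have tgt : a < tau_star q phi.
  rewrite /tau_star /= -/s big_seq.
  apply: (big_ind (fun v => a < v)).
  - apply: sgt; move: js; case: (s) => //= v l _; exact: mem_head.
  - by move=> u v; rewrite lt_min => -> ->.
  - by move=> v /sgt.
have [Tle ct] := goodT _ tgt (fun i im => le_trans tle (j0min i im)).
have Ssum : \sum_j Num.max 0 (x j) = 1 - x m.
  rewrite (bigD1 m) //= max_l ?(ltW xm0) // add0r (eq_bigr x) ?sum_neq ?xsum //.
  move=> j jm; rewrite max_r // xE; apply: divr_ge0; last exact: ltW.
  by have := hbq j jm; lra.
exists ((p - a) / (1 - a)).
  apply/andP; split; first by apply: divr_ge0; lra.
  by rewrite ler_pdivrMr //; lra.
move=> i; rewrite /MLEstar /InvN -/x Ssum thPE.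
case: (eqVneq i m) => [->|im].
  rewrite tgt Pm max_l ?(ltW xm0) //.
  by rewrite !mul0r !mulr0 addr0.
rewrite ltNge Tle im /= ct Pi // max_r; last first.
  rewrite xE; apply: divr_ge0; last exact: ltW.
  by have := hbq i im; lra.
rewrite !xE /d hp.
have dd : 0 < 1 - r * q - q by move: d0; rewrite /d hp.
rewrite -/a; move: (phi i) => b; clearbody a. field.
rewrite -/r; apply/and4P; split; apply/eqP; lra.
Qed.
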